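(* Let $A\in\mathbb{R}^{n\times n}$ and $B\in\mathbb{R}^{n\times m}$ be (unknown) matrices defining the discrete-time system $x^+=Ax+Bu$. Let $\mathrm{S}\in\mathbb{R}^{n_s\times n}$ be such that $\mathcal{S}:=\{x\in\mathbb{R}^n:\mathrm{S}x\le \mathbf{1}\}$ is a C-set, and let $\mathrm{U}\in\mathbb{R}^{n_u\times m}$ be such that $\mathcal{U}:=\{u\in\mathbb{R}^m:\mathrm{U}u\le\mathbf{1}\}$ (a polyhedral convex set containing the origin in its interior). Fix $\lambda\in[0,1)$. Let $u_d(0),\dots,u_d(T-1)\in\mathbb{R}^m$ be an input sequence applied to the system and $x_d(0),\dots,x_d(T)\in\mathbb{R}^n$ the corresponding state sequence, i.e. $x_d(k+1)=Ax_d(k)+Bu_d(k)$ for $k=0,\dots,T-1$, and set $U_{0,T}:=[u_d(0)\ \cdots\ u_d(T-1)]$, $X_{0,T}:=[x_d(0)\ \cdots\ x_d(T-1)]$, $X_{1,T}:=[x_d(1)\ \cdots\ x_d(T)]$. If there exist matrices $G_K\in\mathbb{R}^{T\times n}$ and $P\in\mathbb{R}^{n_s\times n_s}$ with $P\ge 0$ (entrywise) such that $P\mathbf{1}\le\lambda\mathbf{1}$, $\;P\mathrm{S}=\mathrm{S}X_{1,T}G_K$, $\;\mathrm{U}U_{0,T}G_K s\le\mathbf{1}$ for all vertices $s$ of $\mathcal{S}$, and $I_n=X_{0,T}G_K$, then the state-feedback gain $K=U_{0,T}G_K$ is such that $\mathcal{S}$ is $\lambda$-contractive for the closed-loop system $x^+=(A+BK)x$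 and $\mathcal{S}$ is admissible for $\mathcal{U}$ (i.e. $Kx\in\mathcal{U}$ for all $x\in\mathcal{S}$).
   Context: $\mathbf{1}$ denotes the vector of all ones of appropriate dimension; inequalities between vectors/matrices are entrywise. A C-set is a convex compact subset of $\mathbb{R}^n$ containing the origin as an interior point. For $\mu\ge0$, $\mu\mathcal{S}:=\{\mu x:x\in\mathcal{S}\}$. A C-set $\mathcal{S}$ is $\lambda$-contractive for $x^+=Fx$ (with $\lambda\in[0,1)$) if for each $x\in\mathcal{S}$, $\inf\{\lambda'\ge0: Fx\in\lambda'\mathcal{S}\}\le\lambda$. $\mathcal{S}$ is admissible for $\mathcal{U}$ (with gain $K$) if $Kx\in\mathcal{U}$ for every $x\in\mathcal{S}$. *)

(* Defs.v *)
From HB Require Import structures.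
From mathcomp Require Import all_boot all_order all_algebra.
From mathcomp Require Import all_classical all_reals all_analysis.
Set Implicit Arguments. Unset Strict Implicit. Unset Printing Implicit Defensive.
Import Order.TTheory GRing.Theory Num.Theory.
Import numFieldNormedType.Exports.
Local Open Scope classical_set_scope.
Local Open Scope ring_scope.

Definition mxle (R : realType) (p q : nat) (M N : 'M[R]_(p, q)) : Prop :=
  forall i j, M i j <= N i j.

Definition ones (R : realType) (p : nat) : 'cV[R]_p := const_mx 1.

Definition polyh (R : realType) (p q : nat) (M : 'M[R]_(p, q)) : set 'cV[R]_q :=
  [set x | mxle (M *m x) (ones R p)].

Definition convex_set_mx (R : realType) (n : nat) (C : set 'cV[R]_n) : Prop :=
  forall x y t, C x -> C y -> 0 <= t <= 1 -> C (t *: x + (1 - t) *: y).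

Definition Cset (R : realType) (n : nat) (C : set 'cV[R]_n) : Prop :=
  [/\ convex_set_mx C, compact C & (interior C) 0].

Definition scale_set (R : realType) (n : nat) (mu : R) (C : set 'cV[R]_n) :
  set 'cV[R]_n := [set mu *: x | x in C].

Definition contractive (R : realType) (n : nat) (F : 'M[R]_n)
  (C : set 'cV[R]_n) (lam : R) : Prop :=
  forall x, C x -> inf [set l : R | 0 <= l /\ scale_set l C (F *m x)] <= lam.

Definition admissible (R : realType) (n m : nat) (K : 'M[R]_(m, n))
  (C : set 'cV[R]_n) (Uc : set 'cV[R]_m) : Prop :=
  forall x, C x -> Uc (K *m x).

Definition vertex (R : realType) (n : nat) (C : set 'cV[R]_n) (s : 'cV[R]_n) : Prop :=
  C s /\ forall x y t, C x -> C y -> 0 < t < 1 -> s = t *: x + (1 - t) *: y ->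
    x = s /\ y = s.

Definition dmx (R : realType) (p T : nat) (v : nat -> 'cV[R]_p) (off : nat) : 'M[R]_(p, T) :=
  \matrix_(i < p, j < T) v (j + off)%N i 0.

(* Main.v *)
Require Import Defs.
From HB Require Import structures.
From mathcomp Require Import all_boot all_order all_algebra.
From mathcomp Require Import all_classical all_reals all_analysis.
From mathcomp Require Import lra ring.
Import Order.TTheory GRing.Theory Num.Theory.
Import numFieldNormedType.Exports.
Local Open Scope classical_set_scope.
Local Open Scope ring_scope.

Lemma entry_le_norm (R : realType) n (x : 'cV[R]_n) i : `|x i 0| <= `|x|.
Proof. have -> : `|x| = mx_norm x by []. rewrite mx_normrE.
have := @le_bigmax _ R _ 0 (fun ij : 'I_n * 'I_1 => `|x ij.1 ij.2|) (i, 0). apply. Qed.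

Lemma onesE (R : realType) p i j : ones R p i j = 1.
Proof. by rewrite /ones mxE. Qed.

Lemma polyh_bound (R : realType) ns n (S : 'M[R]_(ns, n)) :
  compact (polyh S) -> exists M : R, forall y, polyh S y -> forall j, `|y j 0| <= M.
Proof.
move=> /compact_bounded /pinfty_ex_gt0 [M _ HM]; exists M => y Sy j.
apply: le_trans (entry_le_norm _ _ y j) _; exact: HM.
Qed.

Lemma exists_pos (R : realType) ns n (S : 'M[R]_(ns, n)) (x e : 'cV[R]_n) :
  compact (polyh S) -> polyh S x -> e != 0 -> exists i, 0 < (S *m e) i 0.
Proof.
move=> cS Sx e0; have [M HM] := polyh_bound _ _ _ _ cS.
apply: contrapT => Hn.
have Hle : forall i, (S *m e) i 0 <= 0.
  move=> i; rewrite leNgt; apply/negP => Hi; apply: Hn; by exists i.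
have Hin : forall a, 0 <= a -> polyh S (x + a *: e).
  move=> a a0 i j; rewrite (ord1 j) mulmxDr -scalemxAr.
  have -> : (S *m x + a *: (S *m e)) i 0 = (S *m x) i 0 + a * (S *m e) i 0 by rewrite !mxE.
  rewrite onesE.
  have := Sx i 0; rewrite !onesE => Hx.
  have : a * (S *m e) i 0 <= 0 by rewrite mulr_ge0_le0.
  lra.
have [j ej] : exists j, e j 0 != 0.
  apply: contrapT => Hj; move/negP: e0; apply; apply/eqP/matrixP => j k.
  rewrite (ord1 k) mxE; apply/eqP; apply: contrapT => H; apply: Hj; by exists j; apply/negP.
have ej0 : 0 < `|e j 0| by rewrite normr_gt0.
pose a := (M + `|x j 0| + 1) / `|e j 0|.
have a0 : 0 <= a.
  rewrite /a divr_ge0 //; have := HM _ Sx j; have := normr_ge0 (x j 0); lra.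
have := HM _ (Hin a a0) j; rewrite !mxE.
have Hae : `|a * e j 0| = M + `|x j 0| + 1.
  by rewrite normrM (ger0_norm a0) /a divfK // gt_eqF.
have := ler_normD (x j 0 + a * e j 0) (- x j 0).
rewrite normrN [x j 0 + _]addrC addrK Hae.
lra.
Qed.
Definition inact (R : realType) ns n (S : 'M[R]_(ns, n)) (y : 'cV[R]_n) : {set 'I_ns} :=
  [set i | (S *m y) i 0 < 1].
Arguments inact {R ns n}.

Lemma SxaeE (R : realType) ns n (S : 'M[R]_(ns, n)) (x e : 'cV[R]_n) a i :
  (S *m (x + a *: e)) i 0 = (S *m x) i 0 + a * (S *m e) i 0.
Proof. by rewrite mulmxDr -scalemxAr !mxE. Qed.

Lemma step (R : realType) ns n (S : 'M[R]_(ns, n)) (x e : 'cV[R]_n) :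
  polyh S x -> (forall i, ~ (S *m x) i 0 < 1 -> (S *m e) i 0 = 0) ->
  (exists i, 0 < (S *m e) i 0) ->
  exists2 a : R, 0 < a & polyh S (x + a *: e) /\
    (#|inact S (x + a *: e)| < #|inact S x|)%N.
Proof.
move=> Sx Hact [i0 Pi0].
have Sxi : forall i, (S *m x) i 0 <= 1 by move=> i; have := Sx i 0; rewrite onesE.
pose F i := (1 - (S *m x) i 0) / (S *m e) i 0.
case: (@arg_minP _ R _ i0 (fun i => 0 < (S *m e) i 0) F Pi0) => i1 Pis Hmin.
have Hx1 : (S *m x) i1 0 < 1.
  apply: contrapT => H; have := Hact _ H; move: Pis; lra.
have Fis : F i1 * (S *m e) i1 0 = 1 - (S *m x) i1 0 by rewrite /F divfK // gt_eqF.
exists (F i1).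
  rewrite /F divr_gt0 //; lra.
split.
  move=> j k; rewrite (ord1 k) SxaeE onesE.
  have [Pj|Pj] := ltP 0 ((S *m e) j 0).
    have := Hmin j Pj; rewrite /F => Hj.
    have := ler_wpM2r (ltW Pj) Hj; rewrite divfK ?gt_eqF //.
    have := Sxi j; lra.
  have : F i1 * (S *m e) j 0 <= 0.
    by rewrite mulr_ge0_le0 // /F divr_ge0 //; lra.
  have := Sxi j; lra.
apply: proper_card; apply/properP; split.
  apply/fintype.subsetP => j; rewrite /inact !inE SxaeE => Hj.
  apply: contrapT => H; move: Hj; rewrite (Hact _ H) mulr0 addr0 => Hj; exact: H.
exists i1; rewrite /inact !inE ?SxaeE //; lra.
Qed.
Arguments exists_pos {R ns n S x e}.
Arguments step {R ns n S x e}.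

Lemma nonvertex (R : realType) n (C : set 'cV[R]_n) x :
  C x -> ~ vertex C x ->
  exists w w' s, [/\ C w, C w', 0 < s < 1, x = s *: w + (1 - s) *: w' & w != x].
Proof.
move=> Cx Hv; apply: contrapT => Hne; apply: Hv; split => // y z t Cy Cz Ht Hx.
have [yx|yx] := eqVneq y x; last by exfalso; apply: Hne; exists y, z, t; split.
have [zx|zx] := eqVneq z x; first by [].
exfalso; apply: Hne; exists z, y, (1 - t); split => //.
  move: Ht => /andP [t0 t1]; apply/andP; split; lra.
by rewrite Hx addrC; congr (_ + _); congr (_ *: _); ring.
Qed.
Arguments nonvertex {R n C x}.

Lemma adm (R : realType) ns n nu (S : 'M[R]_(ns, n)) (M : 'M[R]_(nu, n)) :
  compact (polyh S) ->
  (forall s, vertex (polyh S) s -> mxle (M *m s) (ones R nu)) ->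
  forall x, polyh S x -> mxle (M *m x) (ones R nu).
Proof.
move=> cS HV.
suff H : forall k x, polyh S x -> (#|inact S x| < k)%N -> mxle (M *m x) (ones R nu).
  by move=> x Sx; apply: (H _ x Sx (ltnSn _)).
elim => [//|k IH] x Sx Hk.
case: (EM (vertex (polyh S) x)) => [|Hv]; first exact: HV.
have [w [w' [s [Sw Sw' /andP [s0 s1] Hx wx]]]] := nonvertex Sx Hv.
pose d := w - x.
have Sdi : forall i, (S *m d) i 0 = (S *m w) i 0 - (S *m x) i 0.
  by move=> i; rewrite /d mulmxBr !mxE.
have Hact : forall i, ~ (S *m x) i 0 < 1 -> (S *m d) i 0 = 0.
  move=> i Hi.
  have E : (S *m x) i 0 = s * (S *m w) i 0 + (1 - s) * (S *m w') i 0.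
    by rewrite {1}Hx mulmxDr -!scalemxAr !mxE.
  have hw := Sw i 0; have hw' := Sw' i 0; have hx := Sx i 0.
  rewrite onesE in hw hw' hx.
  have h1 : 0 <= s * (1 - (S *m w) i 0) by apply: mulr_ge0; lra.
  have h2 : 0 <= (1 - s) * (1 - (S *m w') i 0) by apply: mulr_ge0; lra.
  have h3 : s * (1 - (S *m w) i 0) = 0.
    have : ~ (S *m x) i 0 < 1 := Hi.
    move=> H; apply: le_anti; apply/andP; split => //.
    apply: contrapT => H'; apply: H.
    have H'' : 0 < s * (1 - (S *m w) i 0) by rewrite ltNge; apply/negP.
    rewrite E; lra.
  move/eqP: h3; rewrite mulf_eq0 => /orP [/eqP s00|/eqP h]; first by move: s0; lra.
  rewrite Sdi; move: Hi; lra.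
have d0 : d != 0 by rewrite /d subr_eq0.
have [a a0 [Sp Hp]] := step Sx Hact (exists_pos cS Sx d0).
have Hact' : forall i, ~ (S *m x) i 0 < 1 -> (S *m (- d)) i 0 = 0.
  by move=> i Hi; rewrite mulmxN mxE Hact // oppr0.
have d0' : - d != 0 by rewrite oppr_eq0.
have [b b0 [Sq Hq]] := step Sx Hact' (exists_pos cS Sx d0').
have IHp := IH _ Sp (leq_trans Hp Hk).
have IHq := IH _ Sq (leq_trans Hq Hk).
move=> i j; rewrite (ord1 j) onesE.
have Ex : x = (a + b)^-1 *: (b *: (x + a *: d) + a *: (x + b *: - d)).
  apply/matrixP => u v; rewrite !mxE; field; lra.
have hp := IHp i 0; have hq := IHq i 0; rewrite onesE in hp hq.
have E2 : (M *m ((a + b)^-1 *: (b *: (x + a *: d) + a *: (x + b *: - d)))) i 0 =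
   (a + b)^-1 * (b * (M *m (x + a *: d)) i 0 + a * (M *m (x + b *: - d)) i 0).
  by rewrite -scalemxAr mulmxDr -!scalemxAr !mxE.
rewrite Ex E2.
rewrite mulrC ler_pdivrMr; last lra.
have := ler_wpM2l (ltW b0) hp; have := ler_wpM2l (ltW a0) hq; lra.
Qed.
Arguments adm {R ns n nu S M}.

Theorem theorem1 (R : realType) (n m ns nu T : nat)
  (A : 'M[R]_n) (B : 'M[R]_(n, m)) (S : 'M[R]_(ns, n)) (U : 'M[R]_(nu, m))
  (lam : R) (ud : nat -> 'cV[R]_m) (xd : nat -> 'cV[R]_n)
  (GK : 'M[R]_(T, n)) (P : 'M[R]_ns) :
  Cset (polyh S) ->
  0 <= lam -> lam < 1 ->
  (forall k, (k < T)%N -> xd k.+1 = A *m xd k + B *m ud k) ->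
  mxle 0 P ->
  mxle (P *m ones R ns) (lam *: ones R ns) ->
  P *m S = S *m dmx T xd 1 *m GK ->
  (forall s, vertex (polyh S) s -> mxle (U *m dmx T ud 0 *m GK *m s) (ones R nu)) ->
  1%:M = dmx T xd 0 *m GK ->
  contractive (A + B *m (dmx T ud 0 *m GK)) (polyh S) lam /\
  admissible (dmx T ud 0 *m GK) (polyh S) (polyh U).
Proof.
move=> [_ cS _] lam0 lam1 Hsys P0 P1 PS HV I0.
split; last first.
  move=> x Sx; rewrite /polyh /= !mulmxA; exact: (adm cS HV x Sx).
have X1E : dmx T xd 1 = A *m dmx T xd 0 + B *m dmx T ud 0.
  apply/matrixP => i j; rewrite !mxE addn1 Hsys // !mxE.
  by congr (_ + _); apply: eq_bigr => k _; rewrite /dmx !mxE addn0.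
have FE : A + B *m (dmx T ud 0 *m GK) = dmx T xd 1 *m GK.
  by rewrite X1E mulmxDl -!mulmxA -I0 mulmx1.
move=> x Sx; rewrite FE.
have HSF : forall i, (S *m (dmx T xd 1 *m GK *m x)) i 0 <= lam.
  move=> i; rewrite !mulmxA -PS -mulmxA.
  apply: le_trans (_ : (P *m ones R ns) i 0 <= lam); last first.
    by move: (P1 i 0); rewrite [X in _ <= X]mxE onesE mulr1.
  rewrite !mxE; apply: ler_sum => k _; rewrite onesE.
  apply: ler_wpM2l; first by have := P0 i k; rewrite mxE.
  by have := Sx k 0; rewrite onesE.
set v := dmx T xd 1 *m GK *m x.
have Hl : forall l, lam < l -> [set l0 : R | 0 <= l0 /\ scale_set l0 (polyh S) v] l.
  move=> l ll; have l0 : 0 < l by lra.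
  split; first lra.
  exists (l^-1 *: v); last by rewrite scalerA mulfV ?gt_eqF // scale1r.
  move=> i j; rewrite (ord1 j) onesE -scalemxAr mxE.
  rewrite mulrC ler_pdivrMr // mul1r; have := HSF i; lra.
have lb : has_lbound [set l0 : R | 0 <= l0 /\ scale_set l0 (polyh S) v].
  by exists 0 => y [].
apply/ler_addgt0Pr => e e0.
apply: ge_inf => //; apply: Hl; lra.
Qed.
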